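(* Let $\mathcal{G}_n$ be the set of binary words $w=w_1\cdots w_{2n}$ with $n$ zeros and $n$ ones. For $w\in\mathcal{G}_n$ define $\mathrm{sz}(w)=|\{i\in[n]: w_i=w_{2n+1-i}=0\}|$, $o_{00}(w)=|\{i\in[n]: w_{2i-1}w_{2i}=00\}|$, and $\#_{001}(w)$ the number of indices $j$ with $w_jw_{j+1}w_{j+2}=001$. Then for all $n,k$, $$|\{w\in\mathcal{G}_n:\mathrm{sz}(w)=k\}|=|\{w\in\mathcal{G}_n:o_{00}(w)=k\}|=|\{w\in\mathcal{G}_n:\#_{001}(w)=k\}|.$$
   Context: $[n]=\{1,2,\dots,n\}$. Occurrences of $001$ are as consecutive subwords. *)

(* Defs.v *)
From mathcomp Require Import all_boot.
Set Implicit Arguments. Unset Strict Implicit. Unset Printing Implicit Defensive.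

(* Binary words of length 2n as (2n).-tuple bool; letter 0 = false, 1 = true.
   Positions are 0-based: w_i (paper, 1-based) is tnth-like nth false w (i-1). *)
Definition letter (n : nat) (w : (2 * n).-tuple bool) (j : nat) : bool :=
  nth false w j.

Definition inG (n : nat) (w : (2 * n).-tuple bool) : bool :=
  count (fun b => ~~ b) w == n.

Definition sz (n : nat) (w : (2 * n).-tuple bool) : nat :=
  #|[set j : 'I_n | ~~ letter w j && ~~ letter w (2 * n - 1 - j)]|.

Definition o00 (n : nat) (w : (2 * n).-tuple bool) : nat :=
  #|[set j : 'I_n | ~~ letter w (2 * j) && ~~ letter w (2 * j).+1]|.

Definition occ001 (n : nat) (w : (2 * n).-tuple bool) : nat :=
  #|[set j : 'I_(2 * n) | (j.+2 < 2 * n) &&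
      [&& ~~ letter w j, ~~ letter w j.+1 & letter w j.+2]]|.

(* Main.v *)
Require Import Defs.
From mathcomp Require Import all_boot.
From mathcomp Require Import zify.
Set Implicit Arguments. Unset Strict Implicit. Unset Printing Implicit Defensive.


Fixpoint allw (L : nat) : seq (seq bool) :=
  if L is L'.+1 then map (cons false) (allw L') ++ map (cons true) (allw L')
  else [:: [::]].

Lemma cons_inj' (b : bool) : injective (cons b).
Proof. by move=> x y [->]. Qed.

Lemma mem_allw L l : (l \in allw L) = (size l == L).
Proof.
elim: L l => [|L IH] [|b l] //=.
- rewrite mem_cat; apply/negbTE; apply/norP; split; apply/mapP => -[x _ //].
rewrite mem_cat eqSS; case: b.
- rewrite (mem_map (@cons_inj' true)) IH.
  by have -> : (true :: l \in map (cons false) (allw L)) = false by apply/mapP => -[].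
- rewrite (mem_map (@cons_inj' false)) IH.
  have -> : (false :: l \in map (cons true) (allw L)) = false by apply/mapP => -[].
  by rewrite orbF.
Qed.

Lemma allw_uniq L : uniq (allw L).
Proof.
elim: L => [|L IH] //=.
rewrite cat_uniq !(map_inj_uniq (@cons_inj' _)) IH /= andbT.
by apply/hasPn => x /mapP[y _ ->]; apply/mapP => -[z _].
Qed.

Lemma card_count m (P : pred (seq bool)) :
  #|[set w : m.-tuple bool | P w]| = count P (allw m).
Proof.
rewrite -sum1dep_card -sum1_count.
have pe : perm_eq (map val (enum {: m.-tuple bool})) (allw m).
  apply: uniq_perm.
  - by rewrite (map_inj_uniq val_inj) enum_uniq.
  - exact: allw_uniq.
  move=> l; rewrite mem_allw; apply/mapP/idP => [[x _ ->]|/eqP H].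
    by rewrite size_tuple.
  have H' : size l == m by rewrite H.
  by exists (Tuple H'); rewrite ?mem_enum.
rewrite -(perm_big _ pe) big_map big_enum_cond /=.
by [].
Qed.


Definition zeros (l : seq bool) := count negb l.
Definition ones (l : seq bool) := count id l.

Definition blk (b : nat) (l : seq bool) := nseq b false ++ true :: l.

Fixpoint wb (p z : nat) : seq (seq bool) :=
  if p is p'.+1 then [seq blk b l | b <- iota 0 z.+1, l <- wb p' (z - b)]
  else [:: nseq z false].

Lemma blk_inj b1 b2 l1 l2 : blk b1 l1 = blk b2 l2 -> b1 = b2 /\ l1 = l2.
Proof.
elim: b1 b2 => [|b1 IH] [|b2] //=; first by case.
by case=> /IH [-> ->].
Qed.

Lemma ones_blk b l : ones (blk b l) = (ones l).+1.
Proof. by elim: b => //= b ->. Qed.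

Lemma zeros_blk b l : zeros (blk b l) = b + zeros l.
Proof. by elim: b => //= b ->. Qed.

Lemma blk_dec l : 0 < ones l -> exists b l', l = blk b l'.
Proof.
elim: l => [|[] l IH] //= H.
- by exists 0, l.
- case: IH => // b [l' ->]; by exists b.+1, l'.
Qed.

Lemma ones0 l : ones l = 0 -> l = nseq (size l) false.
Proof. by elim: l => [|[] l IH] //= H; rewrite -IH. Qed.

Lemma size_oz l : size l = ones l + zeros l.
Proof. by rewrite /ones /zeros -(count_predC id) . Qed.

Lemma mem_wb p z l : (l \in wb p z) = (ones l == p) && (zeros l == z).
Proof.
elim: p z l => [|p IH] z l /=.
- rewrite inE; apply/eqP/andP => [->|[/eqP H1 /eqP H2]].
    by rewrite /ones /zeros !count_nseq /= mul0n mul1n.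
  by rewrite (ones0 H1) size_oz H1 H2.
apply/(@allpairsPdep nat (fun _ => seq bool) _ blk (iota 0 z.+1) (fun b => wb p (z - b)))/andP => [[b [l' [Hb Hl' ->]]]|[/eqP H1 /eqP H2]].
  move: Hb Hl'; rewrite IH ones_blk zeros_blk mem_iota => Hb /andP[/eqP-> /eqP->].
  split=> //; apply/eqP; move: Hb; lia.
have [b [l' E]] : exists b l', l = blk b l' by apply: blk_dec; rewrite H1.
move: H1 H2; rewrite E ones_blk zeros_blk => -[H1] H2.
exists b, l'; split => //; first by rewrite mem_iota; lia.
by rewrite IH H1 eqxx /=; apply/eqP; lia.
Qed.

Lemma wb_uniq p z : uniq (wb p z).
Proof.
elim: p z => [|p IH] z //=.
apply: (@allpairs_uniq_dep nat (fun _ => seq bool) _ blk (iota 0 z.+1) (fun b => wb p (z - b))) => //; first exact: iota_uniq.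
move=> [b1 l1] [b2 l2] _ _ /= /blk_inj [E1 E2].
by subst.
Qed.

Lemma wb_perm p z : perm_eq (wb p z) [seq l <- allw (p + z) | zeros l == z].
Proof.
apply: uniq_perm; first exact: wb_uniq.
  by rewrite filter_uniq // allw_uniq.
move=> l; rewrite mem_filter mem_allw mem_wb size_oz.
by apply/andP/andP => [[/eqP-> /eqP->]|[/eqP H1 /eqP H2]]; split => //; apply/eqP; lia.
Qed.

Lemma sum_wbS p z (F : seq bool -> nat) :
  \sum_(l <- wb p.+1 z) F l = \sum_(b < z.+1) \sum_(l <- wb p (z - b)) F (blk b l).
Proof.
rewrite /= (@big_allpairs_dep _ _ _ nat (fun _ => seq bool) _ blk (iota 0 z.+1) (fun b => wb p (z - b))).
by rewrite -(big_mkord xpredT (fun b => \sum_(l <- wb p (z - b)) F (blk b l))) /index_iota subn0.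
Qed.


Fixpoint occp (l : seq bool) : nat :=
  if l is a :: l' then
    (if l' is b :: c :: _ then ~~ a && ~~ b && c else false) + occp l'
  else 0.

Lemma occp_cons a l : occp (a :: l) =
  (if l is b :: c :: _ then ~~ a && ~~ b && c else false) + occp l.
Proof. by []. Qed.

Lemma occp_true l : occp (true :: l) = occp l.
Proof. by case: l => [|b [|c l]]. Qed.

Lemma occp_blk b l : occp (blk b l) = (1 < b) + occp l.
Proof.
case: b => [|b]; first exact: occp_true.
elim: b => [|b IH]; first by case: l => [|c [|d l]].
have -> : blk b.+2 l = false :: blk b.+1 l by [].
rewrite occp_cons IH.
by case: b {IH}.
Qed.

Lemma occp_nseq z : occp (nseq z false) = 0.
Proof. by elim: z => [|[|[|z]] IH] //=; rewrite IH. Qed.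

Definition W p z := size (wb p z).
Definition NW p z c := if c <= z then W p (z - c) else 0.

Lemma W_S p z : W p.+1 z = \sum_(b < z.+1) W p (z - b).
Proof. by rewrite /W -sum1_size sum_wbS; apply: eq_bigr => b _; rewrite sum1_size. Qed.

Lemma L1 (g : nat -> nat) z c :
  \sum_(b < z.+1) (if c <= z - b then g (z - b - c) else 0) =
  if c <= z then \sum_(b < (z - c).+1) g (z - c - b) else 0.
Proof.
elim: z => [|z IH].
  by rewrite big_ord_recl big_ord0 /=; case: c => [|c] //=; rewrite big_ord_recl big_ord0.
rewrite big_ord_recl subn0.
under eq_bigr => i _ do rewrite lift0 subSS.
rewrite IH.
case: (leqP c z) => Hcz.
  rewrite (leq_trans Hcz (leqnSn _)) (subSn Hcz) [RHS]big_ord_recl subn0.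
  by under [in RHS]eq_bigr => i _ do rewrite lift0 subSS.
rewrite addn0; case: (leqP c z.+1) => Hc //.
have -> : c = z.+1 by move: Hcz Hc; lia.
by rewrite subnn big_ord_recl big_ord0 addn0.
Qed.

Lemma NW_S p z c : \sum_(b < z.+1) NW p (z - b) c = NW p.+1 z c.
Proof. by rewrite /NW L1 W_S. Qed.

Lemma NW_S2 p z c : \sum_(b < z.+1) (1 < b) * NW p (z - b) c = NW p.+1 z c.+2.
Proof.
case: z => [|[|z]].
- by rewrite big_ord_recl big_ord0.
- by rewrite !big_ord_recl big_ord0.
rewrite 2!big_ord_recl.
under eq_bigr => i _ do rewrite !lift0 mul1n !subSS.
rewrite /= !add0n.
by rewrite NW_S /NW !ltnS !subSS.
Qed.

Lemma bin_add_bool (x : bool) o j : 'C(x + o, j.+1) = 'C(o, j.+1) + x * 'C(o, j).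
Proof. by case: x; rewrite ?binS ?mul1n ?mul0n ?addn0. Qed.

Lemma E_closed p z j :
  \sum_(l <- wb p z) 'C(occp l, j) = 'C(p, j) * NW p z (2 * j).
Proof.
elim: p z j => [|p IH] z j.
  by rewrite /= big_seq1 occp_nseq bin0n; case: j => [|j] //=.
case: j => [|j].
  rewrite bin0 mul1n muln0 /NW leq0n subn0.
  under eq_bigr => l _ do rewrite bin0.
  by rewrite sum1_size.
rewrite sum_wbS.
under eq_bigr => b _ do
  (under eq_bigr => l _ do rewrite occp_blk bin_add_bool;
   rewrite big_split /= -big_distrr /= !IH).
rewrite big_split /=.
under [X in _ + X = _]eq_bigr => b _ do rewrite mulnCA.
rewrite -!big_distrr /= NW_S NW_S2 binS mulnDl.
by rewrite (_ : 2 * j.+1 = (2 * j).+2) //; lia.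
Qed.


Fixpoint o00l (l : seq bool) : nat :=
  match l with a :: b :: l' => (~~ a && ~~ b) + o00l l' | _ => 0 end.

Definition M L y := \sum_(l <- allw L) (zeros l == y).
Definition N L z c := if c <= z then M L (z - c) else 0.
Definition PO m z j := \sum_(l <- allw (2 * m)) (zeros l == z) * 'C(o00l l, j).

Lemma sum_allw2 L (F : seq bool -> nat) :
  \sum_(l <- allw L.+2) F l = \sum_(l <- allw L)
    (F [:: false, false & l] + F [:: false, true & l] +
     F [:: true, false & l] + F [:: true, true & l]).
Proof. by rewrite /= !(big_cat, big_map) !big_split /= !addnA. Qed.

Lemma sum_guard (s : seq (seq bool)) c y (F : seq bool -> nat) :
  \sum_(l <- s) ((zeros l + c == y) * F l) =
  if c <= y then \sum_(l <- s) ((zeros l == y - c) * F l) else 0.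
Proof.
case: (leqP c y) => h.
  by apply: eq_bigr => l _; congr (nat_of_bool _ * _); lia.
by rewrite big1 // => l _; rewrite (_ : (zeros l + c == y) = false) //; lia.
Qed.

Lemma sum_guard1 (s : seq (seq bool)) c y :
  \sum_(l <- s) (zeros l + c == y) =
  if c <= y then \sum_(l <- s) (zeros l == y - c) else 0.
Proof.
case: (leqP c y) => h.
  by apply: eq_bigr => l _; congr (nat_of_bool _); lia.
by rewrite big1 // => l _; rewrite (_ : (zeros l + c == y) = false) //; lia.
Qed.

Lemma zFF l : zeros [:: false, false & l] = zeros l + 2.
Proof. by rewrite /zeros /=; lia. Qed.
Lemma zFT l : zeros [:: false, true & l] = zeros l + 1.
Proof. by rewrite /zeros /=; lia. Qed.
Lemma zTF l : zeros [:: true, false & l] = zeros l + 1.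
Proof. by rewrite /zeros /=; lia. Qed.
Lemma zTT l : zeros [:: true, true & l] = zeros l + 0.
Proof. by rewrite /zeros /=; lia. Qed.

Lemma N_rec L z c : N L.+2 z c = N L z c.+2 + 2 * N L z c.+1 + N L z c.
Proof.
rewrite /N /M sum_allw2.
under eq_bigr => l _ do rewrite zFF zFT zTF zTT.
rewrite !big_split /= !sum_guard1.
case: (leqP c z) => h; last first.
  rewrite (_ : c.+1 < z = false); last by lia.
  by rewrite (_ : c < z = false); last by lia.
rewrite (_ : (1 < z - c) = (c.+1 < z)); last by lia.
rewrite (_ : (0 < z - c) = (c < z)); last by lia.
rewrite (_ : z - c - 2 = z - c.+2); last by lia.
rewrite (_ : z - c - 1 = z - c.+1); last by lia.
rewrite subn0 leq0n.
set A := \sum_(l <- allw L) _.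
set B := \sum_(l <- allw L) _.
set C := \sum_(l <- allw L) _.
clearbody A B C.
by case: (c.+1 < z); case: (c < z); lia.
Qed.

Lemma N_shift L z c d : (if d <= z then N L (z - d) c else 0) = N L z (c + d).
Proof.
rewrite /N; case: (leqP d z) => h.
  rewrite (_ : (c <= z - d) = (c + d <= z)); last by lia.
  by rewrite (_ : z - d - c = z - (c + d)) //; lia.
by rewrite (_ : (c + d <= z) = false) //; lia.
Qed.

Lemma o00FF l : o00l [:: false, false & l] = true + o00l l. Proof. by []. Qed.
Lemma o00FT l : o00l [:: false, true & l] = o00l l. Proof. by []. Qed.
Lemma o00TF l : o00l [:: true, false & l] = o00l l. Proof. by []. Qed.
Lemma o00TT l : o00l [:: true, true & l] = o00l l. Proof. by []. Qed.

Lemma PO_closed m z j : PO m z j = 'C(m, j) * N (2 * m - 2 * j) z (2 * j).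
Proof.
elim: m z j => [|m IH] z j.
  rewrite /PO muln0 /= big_seq1 /=.
  case: j => [|j]; last by rewrite bin0n /= muln0.
  by rewrite bin0 mul1n muln0 /N /M /= big_seq1 subn0 muln1.
case: j => [|j].
  rewrite /PO /N /M bin0 mul1n muln0 subn0 /= subn0.
  by apply: eq_bigr => l _; rewrite bin0 muln1.
have IH' : forall y k, \sum_(l <- allw (2 * m)) (zeros l == y) * 'C(o00l l, k) =
   'C(m, k) * N (2 * m - 2 * k) y (2 * k) by move=> y k; rewrite -IH.
rewrite /PO (_ : 2 * m.+1 = (2 * m).+2); last by lia.
rewrite sum_allw2.
under eq_bigr => l _ do rewrite zFF zFT zTF zTT o00FF o00FT o00TF o00TT bin_add_bool mul1n mulnDr.
rewrite !big_split /= !sum_guard !IH' subn0.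
have ifm : forall (b : bool) a x, (if b then a * x else 0) = a * (if b then x else 0).
  by move=> [] a x; rewrite ?muln0.
have if0 : forall x : nat, (if 0 <= z then x else 0) = x by [].
rewrite if0 !ifm !N_shift binS.
rewrite (_ : 2 * j.+1 = (2 * j).+2); last by lia.
rewrite (_ : (2 * m).+2 - (2 * j).+2 = 2 * m - 2 * j); last by lia.
case: (leqP j.+1 m) => hjm; last first.
  rewrite (bin_small hjm) !mul0n !add0n !addn0.
  by rewrite (_ : (2 * j).+2 = 2 * j + 2); last by lia.
rewrite (_ : 2 * j + 2 = (2 * j).+2); last by lia.
have key : N (2 * m - 2 * j) z (2 * j).+2 =
  N (2 * m - (2 * j).+2) z ((2 * j).+2 + 2) + 2 * N (2 * m - (2 * j).+2) z ((2 * j).+2 + 1)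
  + N (2 * m - (2 * j).+2) z (2 * j).+2.
  rewrite (_ : 2 * m - 2 * j = (2 * m - (2 * j).+2).+2); last by lia.
  by rewrite N_rec !addn2 !addn1.
rewrite key.
set A := N _ z ((2 * j).+2 + 2).
set B := N _ z ((2 * j).+2 + 1).
set C := N _ z (2 * j).+2.
clearbody A B C.
rewrite !mulnDr !mulnDl; lia.
Qed.


Lemma card_set_ord n (P : nat -> bool) : #|[set j : 'I_n | P j]| = count P (iota 0 n).
Proof. by rewrite -sum1dep_card -(big_mkord P (fun _ => 1)) sum1_count /index_iota subn0. Qed.

Lemma iota1 n : iota 1 n = map succn (iota 0 n).
Proof. by rewrite -[in LHS](addn0 1) iotaDl. Qed.

Lemma o00_count n (l : seq bool) : size l = 2 * n ->
  count (fun j => ~~ nth false l (2 * j) && ~~ nth false l (2 * j).+1) (iota 0 n) = o00l l.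
Proof.
elim: n l => [|n IH] [|a [|b l]] //=; try lia.
move=> H; rewrite iota1 count_map -IH; last by lia.
congr (_ + _); apply: eq_count => j.
rewrite /preim /=.
by rewrite (_ : (j + 1 * j.+1)%coq_nat = (2 * j).+1) //; lia.
Qed.

Lemma occ_count (l : seq bool) :
  count (fun j => (j.+2 < size l) &&
     [&& ~~ nth false l j, ~~ nth false l j.+1 & nth false l j.+2]) (iota 0 (size l)) = occp l.
Proof.
elim: l => [|a l IH] //=.
rewrite iota1 count_map -IH; congr (_ + _).
  by case: l {IH} => [|b [|c l]] //=; rewrite ?andbT ?andbA.
Qed.


Definition sigma n i := if odd i then 2 * n - 1 - i./2 else i./2.
Definition tau n x := if x < n then 2 * x else (2 * (2 * n - 1 - x)).+1.

Lemma sigma_even n j : sigma n (2 * j) = j.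
Proof. by rewrite /sigma mul2n odd_double doubleK. Qed.

Lemma sigma_odd n j : sigma n (2 * j).+1 = 2 * n - 1 - j.
Proof. by rewrite /sigma mul2n /= odd_double /= uphalf_double. Qed.

Lemma sigma_lt n i : i < 2 * n -> sigma n i < 2 * n.
Proof.
rewrite /sigma; move: (odd_double_half i); case: (odd i) => /= H; lia.
Qed.

Lemma tau_lt n x : x < 2 * n -> tau n x < 2 * n.
Proof. rewrite /tau; case: ifP => H; lia. Qed.

Lemma sigma_tau n x : x < 2 * n -> sigma n (tau n x) = x.
Proof.
rewrite /tau; case: ifP => H1 H2; rewrite ?sigma_even ?sigma_odd; lia.
Qed.

Lemma tau_sigma n i : i < 2 * n -> tau n (sigma n i) = i.
Proof.
rewrite /sigma /tau; move: (odd_double_half i); case: (odd i) => /= H1 H2;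
  case: ifP => H3; lia.
Qed.

Definition phi n (w : (2 * n).-tuple bool) : (2 * n).-tuple bool :=
  @Tuple (2 * n) bool (mkseq (fun i => nth false w (sigma n i)) (2 * n))
    (introT eqP (size_mkseq _ _)).

Lemma phi_inj n : injective (@phi n).
Proof.
move=> w1 w2 E; apply: val_inj; apply: (@eq_from_nth _ false); first by rewrite !size_tuple.
move=> x; rewrite size_tuple => Hx.
have := congr1 (fun w : (2 * n).-tuple bool => nth false w (tau n x)) E.
by rewrite /= !nth_mkseq ?tau_lt // sigma_tau.
Qed.

Lemma perm_sigma n : perm_eq (map (sigma n) (iota 0 (2 * n))) (iota 0 (2 * n)).
Proof.
apply: uniq_perm; last 2 first.
- exact: iota_uniq.
- move=> x; rewrite mem_iota add0n /=; apply/mapP/idP => [[i]|Hx].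
    by rewrite mem_iota add0n /= => Hi ->; apply: sigma_lt.
  by exists (tau n x); rewrite ?mem_iota ?add0n ?tau_lt ?sigma_tau.
rewrite map_inj_in_uniq ?iota_uniq // => i i'; rewrite !mem_iota !add0n /= => Hi Hi' E.
by rewrite -(tau_sigma Hi) -(tau_sigma Hi') E.
Qed.

Lemma inG_phi n (w : (2 * n).-tuple bool) : inG (phi w) = inG w.
Proof.
rewrite /inG; congr (_ == _).
rewrite [tval (phi w)]/= (_ : mkseq _ _ = map (nth false w) (map (sigma n) (iota 0 (2 * n))));
  last by rewrite -map_comp.
rewrite (permP (perm_map (nth false w) (perm_sigma n))).
by rewrite -[in RHS](mkseq_nth false w) size_tuple.
Qed.

Lemma o00_phi n (w : (2 * n).-tuple bool) : o00 (phi w) = sz w.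
Proof.
apply: eq_card => j; rewrite !inE /letter /= !nth_mkseq ?sigma_even ?sigma_odd //.
- have := ltn_ord j; lia.
- have := ltn_ord j; lia.
Qed.

Lemma part1 n k :
  #|[set w : (2 * n).-tuple bool | inG w && (sz w == k)]| =
  #|[set w : (2 * n).-tuple bool | inG w && (o00 w == k)]|.
Proof.
rewrite -[RHS](card_preimset _ (@phi_inj n)).
by apply: eq_card => w; rewrite !inE inG_phi o00_phi.
Qed.


Lemma sum_ind K j x : x < K -> \sum_(i < K) 'C(i, j) * (x == i) = 'C(x, j).
Proof.
move=> Hx; rewrite (bigD1 (Ordinal Hx)) //= eqxx muln1 big1 ?addn0 // => i Hi.
rewrite (_ : (x == i) = false) ?muln0 //.
apply/negbTE; apply: contra Hi => /eqP Ex; apply/eqP; apply: val_inj => /=; by rewrite Ex.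
Qed.

Lemma sum_decomp (s : seq (seq bool)) (f : seq bool -> nat) K j :
  (forall l, l \in s -> f l < K) ->
  \sum_(l <- s) 'C(f l, j) = \sum_(i < K) 'C(i, j) * count (fun l => f l == i) s.
Proof.
elim: s => [|a s IH] H.
  by rewrite big_nil big1 // => i _; rewrite muln0.
rewrite big_cons IH; last by move=> l Hl; apply: H; rewrite inE Hl orbT.
under [RHS]eq_bigr => i _ do rewrite /= mulnDr.
rewrite big_split /= sum_ind //; apply: H; exact: mem_head.
Qed.

Lemma binv (s1 s2 : seq (seq bool)) (f1 f2 : seq bool -> nat) K :
  (forall l, l \in s1 -> f1 l < K) -> (forall l, l \in s2 -> f2 l < K) ->
  (forall j, \sum_(l <- s1) 'C(f1 l, j) = \sum_(l <- s2) 'C(f2 l, j)) ->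
  forall k, count (fun l => f1 l == k) s1 = count (fun l => f2 l == k) s2.
Proof.
move=> H1 H2 Hs.
set a := fun i => count (fun l => f1 l == i) s1.
set b := fun i => count (fun l => f2 l == i) s2.
have Hs' : forall j, \sum_(i < K) 'C(i, j) * a i = \sum_(i < K) 'C(i, j) * b i.
  by move=> j; rewrite -(sum_decomp _ H1) -(sum_decomp _ H2).
have big0 : forall (s : seq (seq bool)) f i, (forall l, l \in s -> f l < K) -> K <= i ->
    count (fun l => f l == i) s = 0.
  move=> s f i Hf Hi; apply/eqP; rewrite -leqn0 leqNgt -has_count; apply/hasPn => l Hl.
  by apply/negP => /eqP E; move: (Hf l Hl); rewrite E ltnNge Hi.
suff : forall d k, K <= k + d -> a k = b k.
  by move=> Hd k; apply: (Hd K); rewrite leq_addl.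
elim=> [|d IH] k Hk.
  by rewrite /a /b !big0 // -(addn0 k).
case: (leqP K (k + d)) => Hkd; first exact: IH.
have Hk' : k < K by lia.
have := Hs' k; rewrite (bigD1 (Ordinal Hk')) //= [in RHS](bigD1 (Ordinal Hk')) //= binn !mul1n.
rewrite (eq_bigr (fun i : 'I_K => 'C(i, k) * b i)); first by move/addIn.
move=> i Hi; case: (ltngtP i k) => Hik.
- by rewrite bin_small ?mul0n.
- by rewrite IH //; lia.
- by move: Hi; rewrite -val_eqE /= Hik eqxx.
Qed.


Lemma o00l_le l : o00l l <= size l.
Proof.
have H : forall m l, size l <= m -> o00l l <= size l.
  elim=> [|m IH] [|a [|b l']] //= Hs.
  have := IH l'; move: Hs; case: (~~ a && ~~ b) => /=; lia.
exact: (H (size l)).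
Qed.

Lemma occp_le l : occp l <= size l.
Proof.
elim: l => [|a l IH] //.
rewrite occp_cons (_ : size (a :: l) = 1 + size l) //.
apply: leq_add => //; case: l {IH} => [|b [|c l']] //=; exact: leq_b1.
Qed.

Lemma W_M p z : W p z = M (p + z) z.
Proof.
rewrite /W (perm_size (wb_perm p z)) size_filter /M -sum1_count big_mkcond.
by apply: eq_bigr => l _; case: (_ == _).
Qed.

Lemma part2 n k :
  #|[set w : (2 * n).-tuple bool | inG w && (o00 w == k)]| =
  #|[set w : (2 * n).-tuple bool | inG w && (occ001 w == k)]|.
Proof.
transitivity (count (fun l => (zeros l == n) && (o00l l == k)) (allw (2 * n))).
  rewrite -card_count; apply: eq_card => w; rewrite !inE /inG /o00.
  rewrite (card_set_ord n (fun j => ~~ letter w (2 * j) && ~~ letter w (2 * j).+1)).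
  by rewrite /letter o00_count ?size_tuple.
transitivity (count (fun l => (zeros l == n) && (occp l == k)) (allw (2 * n))); last first.
  rewrite -card_count; apply: eq_card => w; rewrite !inE /inG /occ001.
  rewrite (card_set_ord (2 * n) (fun j => (j.+2 < 2 * n) &&
      [&& ~~ letter w j, ~~ letter w j.+1 & letter w j.+2])).
  by rewrite /letter; have := occ_count w; rewrite size_tuple => ->.
have e2 : 2 * n = n + n by lia.
have cf : forall (f : seq bool -> nat) s, count (fun l => (zeros l == n) && (f l == k)) s
   = count (fun l => f l == k) (filter (fun l => zeros l == n) s).
  by move=> f s; rewrite count_filter; apply: eq_count => l; rewrite /= andbC.
rewrite !cf [in RHS]e2 -(permP (wb_perm n n)).
apply: (@binv _ _ _ _ (2 * n).+1).
- move=> l; rewrite mem_filter mem_allw => /andP[_ /eqP <-].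
  by rewrite ltnS o00l_le.
- move=> l; rewrite mem_wb => /andP[/eqP H1 /eqP H2].
  by rewrite ltnS (leq_trans (occp_le l)) // size_oz H1 H2; lia.
move=> j.
rewrite E_closed big_filter big_mkcond.
transitivity (PO n n j).
  by rewrite /PO; apply: eq_bigr => l _; case: (_ == _); rewrite ?mul1n ?mul0n.
rewrite PO_closed; congr (_ * _).
rewrite /N /NW W_M; case: ifP => h //.
by congr (M _ _); lia.
Qed.

Unset Implicit Arguments.

Theorem theorem3p3 (n k : nat) :
  #|[set w : (2 * n).-tuple bool | inG w && (sz w == k)]| =
    #|[set w : (2 * n).-tuple bool | inG w && (o00 w == k)]| /\
  #|[set w : (2 * n).-tuple bool | inG w && (o00 w == k)]| =
    #|[set w : (2 * n).-tuple bool | inG w && (occ001 w == k)]|.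
Proof. by split; [exact: part1 | exact: part2]. Qed.
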